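(* Let $\Lambda^\circ=p(\varphi(L^\times(0)))\subset T^*T^\circ$ and, for nonempty $\mathfrak I\subset\{1,\dots,n\}$, $\mathfrak I\Lambda^\circ=p(\varphi(\mathfrak I L^\times(0)))$. Then $\Lambda^\circ=\Lambda_\Sigma$ and $\mathfrak I\Lambda^\circ=\sigma_{\mathfrak I}T^\circ\times\sigma_{\mathfrak I}$.
   Context: $M^\times=(\mathbb C^\times)^n$ with coordinates $z_a=r_ae^{i\theta_a}$, $W=z_1\cdots z_n$. $I_{\min}(z)$ = indices with $r_a$ minimal; $L^\times(0)=\{z\in M^\times:W(z)\in\mathbb R_{>0},\ \theta_a=0\ \forall a\notin I_{\min}(z)\}$, and for nonempty $\mathfrak I$, $\mathfrak I L^\times(0)$ is its subset where $I_{\min}(z)=\mathfrak I$. $T=(S^1)^n$, $T^*T\cong T\times\mathbb R^n$, $\varphi:M^\times\to T^*T$, $\varphi(z)=(\theta_1,\dots,\theta_n,r_1^2/2,\dots,r_n^2/2)$. $T^\circ=\{\theta\in T:\sum\theta_a=0\}$, $(\mathfrak t^\circ)^*=\mathbb R^n/\mathbb R(e_1+\cdots+e_n)$ with $\bar e_a$ the images of coordinate vectors, and $p:T^*T\times_TT^\circ=T^\circ\times\mathbb R^n\to T^\circ\times(\mathfrak t^\circ)^*=T^*T^\circ$ the projection (note $\varphi(L^\times(0))\subset T^*T\times_TT^\circ$). $\Sigma$ is the complete fan with cones $\sigma_{\mathfrak I}=\mathrm{Span}_{>0}\{\bar e_a:a\notin\mathfrak I\}$, $\sigma_{\mathfrak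 I}T^\circ=\{\theta\in T^\circ:\theta_a=0\ \forall a\notin\mathfrak I\}$ (the subtorus with Lie algebra $\sigma_{\mathfrak I}^\perp$), and $\Lambda_\Sigma=\bigcup_{\mathfrak I}\sigma_{\mathfrak I}T^\circ\times\sigma_{\mathfrak I}$. *)

(* Defs.v *)
From HB Require Import structures.
From mathcomp Require Import all_boot all_order all_algebra.
From mathcomp Require Import complex.
From mathcomp Require Import reals.
Set Implicit Arguments. Unset Strict Implicit. Unset Printing Implicit Defensive.
Import Order.TTheory GRing.Theory Num.Theory.
Local Open Scope ring_scope.

Section Defs.
Variables (R : realType) (n : nat).
Local Notation C := R[i].

(* modulus r = |z| (a real number) and phase e^{i theta} = z/|z| in S^1 ⊂ C *)
Definition radius (z : C) : R := complex.Re `|z|.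
Definition phase (z : C) : C := z / `|z|.

Definition inMx (z : 'I_n -> C) : Prop := forall a, z a != 0.
Definition Wpot (z : 'I_n -> C) : C := \prod_(a < n) z a.

Definition Imin (z : 'I_n -> C) : {set 'I_n} :=
  [set a | [forall b, radius (z a) <= radius (z b)]].

(* L^x(0): W(z) in R_{>0} (0 < w in the order of C means w real positive),
   theta_a = 0 (i.e. phase = 1 in S^1) for a outside I_min(z). *)
Definition Lx0 (z : 'I_n -> C) : Prop :=
  inMx z /\ 0 < Wpot z /\ (forall a, a \notin Imin z -> phase (z a) = 1).

Definition ILx0 (I : {set 'I_n}) (z : 'I_n -> C) : Prop := Lx0 z /\ Imin z = I.

(* T = (S^1)^n, S^1 = unit circle in C; T° = {sum theta_a = 0} = {prod = 1} *)
Definition inT (th : 'I_n -> C) : Prop := forall a, `|th a| = 1.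
Definition inTcirc (th : 'I_n -> C) : Prop := inT th /\ \prod_(a < n) th a = 1.

(* phi : M^x -> T^*T = T x R^n *)
Definition phi (z : 'I_n -> C) : ('I_n -> C) * ('I_n -> R) :=
  (fun a => phase (z a), fun a => radius (z a) ^+ 2 / 2).

(* (t°)^* = R^n / R(e_1+...+e_n): xi and eta represent the same class *)
Definition same_class (xi eta : 'I_n -> R) : Prop :=
  exists c : R, forall a, xi a = eta a + c.

Definition evec (b : 'I_n) : 'I_n -> R := fun a => (a == b)%:R.

Definition in_cone (I : {set 'I_n}) (xi : 'I_n -> R) : Prop :=
  exists c : 'I_n -> R, (forall b, b \notin I -> 0 < c b) /\
    same_class xi (fun a => \sum_(b | b \notin I) c b * evec b a).

Definition sigmaT (I : {set 'I_n}) (th : 'I_n -> C) : Prop :=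
  inTcirc th /\ (forall a, a \notin I -> th a = 1).

Definition in_pphi (A : ('I_n -> C) -> Prop) (th : 'I_n -> C) (xi : 'I_n -> R)
  : Prop :=
  exists z, A z /\ (phi z).1 =1 th /\ same_class (phi z).2 xi.

Definition in_LambdaSigma (th : 'I_n -> C) (xi : 'I_n -> R) : Prop :=
  exists I : {set 'I_n}, I != set0 /\ sigmaT I th /\ in_cone I xi.

End Defs.

(* Main.v *)
Require Import Defs.
From HB Require Import structures.
From mathcomp Require Import all_boot all_order all_algebra.
From mathcomp Require Import complex reals lra.
Import Order.TTheory GRing.Theory Num.Theory.
Local Open Scope ring_scope.
Local Open Scope complex_scope.

Section Aux.
Variables (R : realType) (n : nat).

Lemma exmin (f : 'I_n -> R) (n_gt0 : (0 < n)%N) : exists a, forall b, f a <= f b.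
Proof.
case: (@arg_minP _ _ _ (Ordinal n_gt0) xpredT f isT) => a _ H.
by exists a => b; apply: H.
Qed.

Lemma radius_ge0 (z : R[i]) : 0 <= radius z.
Proof. by rewrite /radius normc_def /= sqrtr_ge0. Qed.

Lemma sum_evec (I : {set 'I_n}) (c : 'I_n -> R) a :
  \sum_(b | b \notin I) c b * @evec R n b a = if a \in I then 0 else c a.
Proof.
case: ifP => Ha.
  apply: big1 => b Hb; rewrite /evec; case: eqP => [e|_]; last by rewrite mulr0.
  by rewrite -e Ha in Hb.
rewrite (bigD1 a) ?Ha //= /evec eqxx mulr1 big1 ?addr0 // => b /andP[_ Hb].
by rewrite eq_sym (negbTE Hb) mulr0.
Qed.

Lemma normRC (r : R) (t : R[i]) : 0 <= r -> `|t| = 1 -> `|r%:C * t| = r%:C.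
Proof. by move=> r0 t1; rewrite normrM t1 mulr1 ger0_norm // ler0c. Qed.


Lemma fwd (n_gt0 : (0 < n)%N) (z : 'I_n -> R[i]) th (xi : 'I_n -> R) :
  Lx0 z -> (phi z).1 =1 th -> same_class (phi z).2 xi -> inTcirc th ->
  [/\ sigmaT (Imin z) th, in_cone (Imin z) xi & Imin z != set0].
Proof.
move=> [zM [W0 Hph]] Hth [d Hd] Tth.
set f := fun a => radius (z a).
have [a0 Ha0] := exmin f n_gt0.
have a0I : a0 \in Imin z by rewrite inE; apply/forallP.
split.
- split=> // a Ha; by rewrite -(Hth a) /= Hph.
- exists (fun b => f b ^+2/2 - f a0 ^+2/2); split.
  + move=> b Hb.
    have [b' lt] : exists b', f b' < f b.
      move: Hb; rewrite inE negb_forall => /existsP[b']; rewrite -ltNge => ?.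
      by exists b'.
    have := Ha0 b'; have:= radius_ge0 (z a0); rewrite -/(f a0) => h1 h2.
    nra.
  + exists (f a0 ^+2/2 - d) => a. rewrite sum_evec.
    move: (Hd a) => /=; rewrite -/(f a) => Hda.
    case: ifP => Ha.
    * rewrite inE in Ha; move/forallP: Ha => /(_ a0) h.
      have e : f a = f a0 by apply/le_anti; rewrite h Ha0.
      rewrite e in Hda; lra.
    * lra.
- by apply/set0Pn; exists a0.
Qed.

Lemma bwd (I : {set 'I_n}) (th : 'I_n -> R[i]) (xi : 'I_n -> R) :
  I != set0 -> sigmaT I th -> in_cone I xi ->
  exists z, ILx0 I z /\ (phi z).1 =1 th /\ same_class (phi z).2 xi.
Proof.
move=> In0 [Tth Hth1] [c [cpos [d Hd]]].
set s := fun a => \sum_(b | b \notin I) c b * @evec R n b a.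
have sE : forall a, s a = if a \in I then 0 else c a by move=> a; apply: sum_evec.
have s0 : forall a, 0 <= s a.
  by move=> a; rewrite sE; case: ifP => // /negbT /cpos /ltW.
set r := fun a => Num.sqrt (2 * (s a + 1)).
have r0 : forall a, 0 < r a.
  by move=> a; rewrite sqrtr_gt0; have := s0 a; lra.
have r2 : forall a, r a ^+2 = 2 * (s a + 1).
  by move=> a; rewrite sqr_sqrtr //; have := s0 a; lra.
have th1 : forall a, `|th a| = 1 by case: Tth.
have rC : forall a, (r a)%:C != 0.
  by move=> a; rewrite eq_complex /= negb_and gt_eqF.
have nz a : `|(r a)%:C * th a| = (r a)%:C by apply: normRC; [apply: ltW|].
have rad a : radius ((r a)%:C * th a) = r a by rewrite /radius nz.
have ph a : phase ((r a)%:C * th a) = th a.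
  by rewrite /phase nz mulrC mulrA mulVf ?mul1r.
exists (fun a => (r a)%:C * th a).
have Imin_eq : Imin (fun a => (r a)%:C * th a) = I.
  apply/setP => a; rewrite inE; apply/forallP/idP.
  - move=> H; apply: contraT => Ha.
    have /set0Pn [b0 Hb0] := In0.
    have := H b0; rewrite /= !rad ler_sqrt; last by have := s0 b0; lra.
    rewrite (sE a) (sE b0) Hb0 (negbTE Ha).
    have := cpos a Ha; lra.
  - move=> Ha b; rewrite /= !rad ler_sqrt; last by have := s0 b; lra.
    rewrite (sE a) Ha; have := s0 b; lra.
split; [split; [split; [|split] |] | split].
- by move=> a; rewrite -normr_eq0 nz.
- rewrite /Wpot big_split /=; case: Tth => _ ->; rewrite mulr1.
  by apply: prodr_gt0 => a _; rewrite ltcE /= eqxx r0.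
- by move=> a Ha; rewrite ph; apply: Hth1; rewrite -Imin_eq.
- exact: Imin_eq.
- by move=> a /=; apply: ph.
- exists (1 - d) => a /=; rewrite rad r2 Hd -/(s a); lra.
Qed.

End Aux.

Theorem mainTheorem16 (R : realType) (n : nat) (n_gt0 : (0 < n)%N) :
  (forall (th : 'I_n -> R[i]) (xi : 'I_n -> R), inTcirc th ->
     (in_pphi (@Lx0 R n) th xi <-> in_LambdaSigma th xi)) /\
  (forall I : {set 'I_n}, I != set0 ->
     forall (th : 'I_n -> R[i]) (xi : 'I_n -> R), inTcirc th ->
       (in_pphi (ILx0 I) th xi <-> sigmaT I th /\ in_cone I xi)).
Proof.
split.
- move=> th xi Tth; split.
  + move=> [z [Lz [H1 H2]]].
    have [? ? ?] := @fwd R n n_gt0 z th xi Lz H1 H2 Tth.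
    by exists (Imin z).
  + move=> [I [In0 [HT HC]]].
    have [z [[Lz _] [H1 H2]]] := @bwd R n _ th xi In0 HT HC.
    by exists z.
- move=> I In0 th xi Tth; split.
  + move=> [z [[Lz EI] [H1 H2]]].
    have [? ? ?] := @fwd R n n_gt0 z th xi Lz H1 H2 Tth.
    by rewrite -EI.
  + move=> [HT HC].
    have [z [Lz [H1 H2]]] := @bwd R n _ th xi In0 HT HC.
    by exists z.
Qed.
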